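(* Let $n\ge 1$ be an integer and let $C$ be a real constant with $C>\frac{(n-4)^2}{16}$. Then $$\sum_{j=0}^n\sqrt{C+j}\;>\;(n+1)\sqrt{C+\tfrac{n}{2}-1}.$$ *)

(* Defs.v *)
From Stdlib Require Import Reals.

(* Main.v *)
Require Import Defs.
From Stdlib Require Import Reals.
From Stdlib Require Import Lra Lia Psatz.
Open Scope R_scope.

Lemma key (x y : R) : 0 <= x -> 0 <= y -> (x - y)^2 < 8*(x+y) - 16 ->
  sqrt x + sqrt y > 2 * sqrt ((x+y)/2 - 1).
Proof.
  intros hx hy h.
  assert (hs : 0 <= (x+y)/2 - 1) by (pose proof (pow2_ge_0 (x-y)); lra).
  pose proof (sqrt_sqrt x hx) as ex. pose proof (sqrt_sqrt y hy) as ey.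
  pose proof (sqrt_sqrt _ hs) as ew.
  pose proof (sqrt_pos x). pose proof (sqrt_pos y). pose proof (sqrt_pos ((x+y)/2-1)).
  set (u := sqrt x) in *. set (v := sqrt y) in *. set (w := sqrt ((x+y)/2-1)) in *.
  destruct (Rle_lt_dec (u+v) (2*w)) as [Hc|Hc]; [|lra].
  exfalso.
  assert (h1 : (u+v)*(u+v) <= (2*w)*(2*w)) by nra.
  assert (h2 : 2*(u*v) <= x + y - 4) by nra.
  assert (h3 : 0 <= u*v) by nra.
  assert (h4 : (2*(u*v))*(2*(u*v)) <= (x+y-4)*(x+y-4)) by nra.
  assert (h5 : (u*v)*(u*v) = x*y) by (rewrite <- ex, <- ey; ring).
  nra.
Qed.

Lemma sum_rev (f : nat -> R) (n : nat) :
  sum_f_R0 (fun j => f (n - j)%nat) n = sum_f_R0 f n.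
Proof.
  revert f. induction n as [|n IH]; intro f.
  - simpl. reflexivity.
  - rewrite decomp_sum by lia. simpl pred.
    replace (sum_f_R0 (fun i => f (S n - S i)%nat) n) with (sum_f_R0 (fun i => f (n - i)%nat) n).
    2:{ apply sum_eq. intros i _. f_equal. }
    rewrite IH. simpl. replace (S n - 0)%nat with (S n) by lia. ring.
Qed.

Lemma sum_pos (h : nat -> R) (n : nat) : (forall j, (j <= n)%nat -> h j > 0) ->
  sum_f_R0 h n > 0.
Proof.
  induction n as [|n IH]; intro H.
  - simpl. apply H. lia.
  - simpl. assert (sum_f_R0 h n > 0) by (apply IH; intros; apply H; lia).
    assert (h (S n) > 0) by (apply H; lia). lra.
Qed.

Theorem lemma2 (n : nat) (C : R) (hn : (1 <= n)%nat)
  (hC : C > (INR n - 4) ^ 2 / 16) :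
  sum_f_R0 (fun j => sqrt (C + INR j)) n
    > INR (n + 1) * sqrt (C + INR n / 2 - 1).
Proof.
  set (g := sqrt (C + INR n / 2 - 1)).
  set (f := fun j => sqrt (C + INR j)).
  assert (HC0 : 0 <= C) by (pose proof (pow2_ge_0 (INR n - 4)); lra).
  assert (Hp : forall j, (j <= n)%nat -> f j + f (n - j)%nat - 2 * g > 0).
  { intros j hj. unfold f, g. rewrite minus_INR by exact hj.
    pose proof (le_INR _ _ hj). pose proof (pos_INR j).
    replace (C + INR n / 2 - 1) with (((C + INR j) + (C + (INR n - INR j)))/2 - 1) by field.
    assert (Hk := key (C + INR j) (C + (INR n - INR j))). 
    assert ((INR n - 2 * INR j)^2 <= INR n ^2) by nra.
    assert (H' : sqrt (C + INR j) + sqrt (C + (INR n - INR j)) >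
      2 * sqrt ((C + INR j + (C + (INR n - INR j))) / 2 - 1)) by (apply Hk; nra).
    lra. }
  pose proof (sum_pos _ n Hp) as Hs.
  assert (E : sum_f_R0 (fun j => f j + f (n - j)%nat - 2 * g) n
     = sum_f_R0 f n + sum_f_R0 (fun j => f (n - j)%nat) n - sum_f_R0 (fun _ => 2*g) n).
  { rewrite <- plus_sum, <- minus_sum. reflexivity. }
  rewrite E, sum_rev, sum_cte in Hs.
  rewrite plus_INR. simpl INR at 2.
  replace (INR n + 1) with (INR (S n)) by (rewrite S_INR; ring).
  change (sum_f_R0 f n > INR (S n) * g). lra.
Qed.
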